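(* Let $f:[0,1]\to\mathbb{R}$ with $f(0),f(1)\in\mathbb{Z}$. (a) If $f(x)-x$ is monotone increasing on $[0,1]$, then $\widetilde{B}_n(f)$ and $\widehat{B}_n(f)$ are monotone increasing on $[0,1]$ for all $n\in\mathbb{N}_+$. (b) If $f(x)+x$ is monotone decreasing on $[0,1]$, then $\widetilde{B}_n(f)$ and $\widehat{B}_n(f)$ are monotone decreasing on $[0,1]$ for all $n\in\mathbb{N}_+$.
   Context: For $n\in\mathbb{N}_+$ and $f:[0,1]\to\mathbb{R}$, define $\widetilde{B}_n(f)(x):=\sum_{k=0}^n \left[f\left(\frac{k}{n}\right)\binom{n}{k}\right]x^k(1-x)^{n-k}$, where $[\alpha]$ is the largest integer $\le\alpha$, and $\widehat{B}_n(f)(x):=\sum_{k=0}^n \left\langle f\left(\frac{k}{n}\right)\binom{n}{k}\right\rangle x^k(1-x)^{n-k}$, where $\langle\alpha\rangle$ is the integer nearest to $\alpha$ (when $\alpha$ is a half-integer, $\langle\alpha\rangle$ may be either neighbouring integer, chosen arbitrarily; the result holds for any such choice). Monotone increasing/decreasing are meant in the non-strict sense. *)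

(* Defs.v *)
From mathcomp Require Import all_boot all_order all_algebra.
From mathcomp Require Import reals.
Set Implicit Arguments. Unset Strict Implicit. Unset Printing Implicit Defensive.
Import Order.TTheory GRing.Theory Num.Theory.
Local Open Scope ring_scope.

Definition mono_incr01 {R : realType} (g : R -> R) : Prop :=
  forall x y : R, 0 <= x -> x <= y -> y <= 1 -> g x <= g y.
Definition mono_decr01 {R : realType} (g : R -> R) : Prop :=
  forall x y : R, 0 <= x -> x <= y -> y <= 1 -> g y <= g x.

Definition bcoef {R : realType} (n : nat) (f : R -> R) (k : nat) : R :=
  f (k%:R / n%:R) * ('C(n, k))%:R.

Definition Bint {R : realType} (n : nat) (c : nat -> int) (x : R) : R :=
  \sum_(k < n.+1) (c k)%:~R * x ^+ k * (1 - x) ^+ (n - k).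

Definition Btilde {R : realType} (n : nat) (f : R -> R) (x : R) : R :=
  Bint n (fun k => Num.floor (bcoef n f k)) x.

(* c k is an integer nearest to f(k/n) binom(n,k), for every k <= n
   (at half-integers either neighbour may be chosen, independently for each k) *)
Definition nearest_coefs {R : realType} (n : nat) (f : R -> R) (c : nat -> int) : Prop :=
  forall k : nat, (k <= n)%N -> `|bcoef n f k - (c k)%:~R| <= 2^-1.

Definition Bhat {R : realType} (n : nat) (c : nat -> int) (x : R) : R := Bint n c x.

(* Main.v *)
Require Import Defs.
From mathcomp Require Import all_boot all_order all_algebra.
From mathcomp Require Import reals.
From mathcomp Require Import ring lra.
Set Implicit Arguments. Unset Strict Implicit.
Import Order.TTheory GRing.Theory Num.Theory.
Local Open Scope ring_scope.

Section G.
Variable R : realType.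

Definition G (n : nat) (b : nat -> R) (x : R) : R :=
  \sum_(k < n.+1) b k * ('C(n, k))%:R * x ^+ k * (1 - x) ^+ (n - k).

Lemma G0 b x : G 0 b x = b 0%N.
Proof. by rewrite /G big_ord1 /= bin0 !expr0 !mulr1. Qed.

Lemma GS n b x :
  G n.+1 b x = (1 - x) * G n b x + x * G n (fun k => b k.+1) x.
Proof.
rewrite /G big_ord_recl /= bin0 subn0.
under eq_bigr => i _ do rewrite /bump /= add1n binS natrD mulrDr !mulrDl subSS.
rewrite big_split /= addrA.
congr (_ + _).
  rewrite [in RHS]big_ord_recl /= bin0 subn0 mulrDr.
  rewrite [in LHS]big_ord_recr /= bin_small // mulr0 !mul0r addr0.
  congr (_ + _); first by rewrite exprS; ring.
  rewrite mulr_sumr; apply: eq_bigr => i _; rewrite /bump /= add1n.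
  have hi : (i < n)%N by apply: ltn_ord.
  rewrite (_ : (n - i) = (n - i.+1).+1)%N; last by rewrite subnSK.
  by rewrite [(1 - x) ^+ (_.+1)]exprS; ring.
rewrite mulr_sumr; apply: eq_bigr => i _.
by rewrite exprS; ring.
Qed.

Lemma G_ge0 n b x : (forall k, (k <= n)%N -> 0 <= b k) -> 0 <= x -> x <= 1 -> 0 <= G n b x.
Proof.
move=> hb hx0 hx1; rewrite /G; apply: sumr_ge0 => i _.
have hi : (i <= n)%N by rewrite -ltnS ltn_ord.
by rewrite !mulr_ge0 ?ler0n ?exprn_ge0 ?hb // subr_ge0.
Qed.

Lemma GB n b1 b2 x : G n (fun k => b2 k - b1 k) x = G n b2 x - G n b1 x.
Proof. by rewrite /G -sumrB; apply: eq_bigr => i _; ring. Qed.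

Lemma GN n b x : G n (fun k => - b k) x = - G n b x.
Proof. by rewrite /G -sumrN; apply: eq_bigr => i _; ring. Qed.

Lemma G_incr n b : (forall k, (k < n)%N -> b k <= b k.+1) -> mono_incr01 (G n b).
Proof.
elim: n b => [|n IH] b hb x y hx hxy hy; first by rewrite !G0.
rewrite !GS.
have h1 := IH b (fun k hk => hb k (ltnW hk)) x y hx hxy hy.
have h2 := IH (fun k => b k.+1) (fun k hk => hb k.+1 hk) x y hx hxy hy.
have h3 : 0 <= G n (fun k => b k.+1) x - G n b x.
  rewrite -GB; apply: G_ge0 => //; last by apply: (le_trans hxy).
  by move=> k hk; rewrite subr_ge0; apply: hb.
have p1 : 0 <= (1 - y) * (G n b y - G n b x) by rewrite mulr_ge0 // ?subr_ge0.
have p2 : 0 <= y * (G n (fun k => b k.+1) y - G n (fun k => b k.+1) x).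
  by rewrite mulr_ge0 // ?subr_ge0 // (le_trans hx hxy).
have p3 : 0 <= (y - x) * (G n (fun k => b k.+1) x - G n b x) by rewrite mulr_ge0 // subr_ge0.
rewrite -subr_ge0.
have -> : (1 - y) * G n b y + y * G n (fun k => b k.+1) y -
  ((1 - x) * G n b x + x * G n (fun k => b k.+1) x) =
  (1 - y) * (G n b y - G n b x) + y * (G n (fun k => b k.+1) y - G n (fun k => b k.+1) x)
  + (y - x) * (G n (fun k => b k.+1) x - G n b x) by ring.
by rewrite !addr_ge0.
Qed.

Lemma G_decr n b : (forall k, (k < n)%N -> b k.+1 <= b k) -> mono_decr01 (G n b).
Proof.
move=> hb x y hx hxy hy.
have := @G_incr n (fun k => - b k) _ x y hx hxy hy.
rewrite !GN lerN2; apply => k hk; rewrite lerN2; exact: hb.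
Qed.
End G.
Lemma bin_ge (n k : nat) : (0 < k)%N -> (k < n)%N -> (n <= 'C(n, k))%N.
Proof.
elim: n k => [|m IH] [|j] //= _ hj.
rewrite binS.
case: j hj => [|j] hj; first by rewrite bin1 bin0 addn1.
have h1 := IH j.+1 isT hj.
have h2 : (0 < 'C(m, j.+2))%N by rewrite bin_gt0.
by have := leq_add h2 h1; rewrite add1n.
Qed.

Section Coef.
Variable R : realType.
Variable f : R -> R.
Variable n : nat.
Hypothesis hn : (0 < n)%N.
Hypothesis hf0 : exists z : int, f 0 = z%:~R.
Hypothesis hf1 : exists z : int, f 1 = z%:~R.

Let d k := f (k%:R / n%:R).
Let C k : R := ('C(n, k))%:R.

Lemma nR_gt0 : 0 < n%:R :> R. Proof. by rewrite ltr0n. Qed.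

Lemma C_gt0 k : (k <= n)%N -> 0 < C k.
Proof. by move=> hk; rewrite /C ltr0n bin_gt0. Qed.

Lemma bcoefE k : bcoef n f k = d k * C k. Proof. by []. Qed.

Lemma ends j : (j <= n)%N -> ~~ ((0 < j)%N && (j < n)%N) ->
  C j = 1 /\ exists z : int, d j = z%:~R.
Proof.
move=> hj; rewrite negb_and -leqNgt leqn0 => /orP [/eqP -> | hnj].
  by rewrite /C bin0 /d mul0r; split.
have -> : j = n by apply/eqP; rewrite eqn_leq hj leqNgt.
rewrite /C binn /d divff ?pnatr_eq0 -?lt0n //; split => //.
Qed.

Lemma C_ge j : (0 < j)%N -> (j < n)%N -> n%:R <= C j.
Proof. by move=> h1 h2; rewrite /C ler_nat bin_ge. Qed.

Lemma Lfloor j : (j <= n)%N ->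
  d j - n%:R^-1 <= (Num.floor (bcoef n f j))%:~R / C j <= d j.
Proof.
move=> hj; have hC := C_gt0 hj; have hn0 := nR_gt0.
have hni : 0 < n%:R^-1 :> R by rewrite invr_gt0.
rewrite bcoefE; apply/andP; split; last first.
  by rewrite ler_pdivrMr // floor_le.
case: (boolP ((0 < j)%N && (j < n)%N)) => [/andP [h1 h2] | hne]; last first.
  have [-> [z ->]] := ends hj hne.
  by rewrite mulr1 intrKfloor divr1 lerBlDr lerDl ltW.
have hCn := C_ge h1 h2.
rewrite ler_pdivlMr //.
have hfl := floorD1_gt (d j * C j).
rewrite intrD in hfl.
have : n%:R^-1 * C j >= 1.
  by rewrite mulrC ler_pdivlMr // mul1r.
move=> h; rewrite mulrBl; lra.
Qed.

Lemma Lnear j (c : int) : (j <= n)%N -> `|d j * C j - c%:~R| <= 2^-1 ->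
  `|c%:~R / C j - d j| <= 2^-1 * n%:R^-1.
Proof.
move=> hj hc; have hC := C_gt0 hj; have hn0 := nR_gt0.
have hni : 0 < n%:R^-1 :> R by rewrite invr_gt0.
case: (boolP ((0 < j)%N && (j < n)%N)) => [/andP [h1 h2] | hne]; last first.
  have [hC1 [z hz]] := ends hj hne.
  rewrite hC1 hz mulr1 -intrB -intr_norm in hc.
  have : `|z - c| = 0.
    have h : `|z - c| < 1 by rewrite -(ltr_int R); apply: (le_lt_trans hc); lra.
    apply/eqP; rewrite -normr_le0; by rewrite -[1]add0r ltzD1 in h.
  move/eqP; rewrite normr_eq0 subr_eq0 => /eqP <-.
  by rewrite hC1 divr1 hz subrr normr0 mulr_ge0 // ltW // invr_gt0.
have hCn := C_ge h1 h2.
have -> : c%:~R / C j - d j = - (d j * C j - c%:~R) / C j.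
  by field; rewrite lt0r_neq0.
rewrite normrM normrN normfV (gtr0_norm hC).
apply: (le_trans (ler_wpM2r _ hc)); first by rewrite invr_ge0 ltW.
by rewrite ler_wpM2l // ?invr_ge0 // lef_pV2 // posrE.
Qed.

End Coef.

Lemma BintG (R : realType) n (c : nat -> int) (x : R) :
  Bint n c x = G n (fun k => (c k)%:~R / ('C(n, k))%:R) x.
Proof.
rewrite /Bint /G; apply: eq_bigr => i _.
have hi : (i <= n)%N by rewrite -ltnS ltn_ord.
by rewrite divfK // pnatr_eq0 -lt0n bin_gt0.
Qed.

Lemma step_incr (R : realType) (f : R -> R) n : (0 < n)%N ->
  mono_incr01 (fun x => f x - x) ->
  forall k, (k < n)%N -> f (k%:R / n%:R) + n%:R^-1 <= f (k.+1%:R / n%:R).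
Proof.
move=> hn hinc k hk.
have hn0 : 0 < n%:R :> R by rewrite ltr0n.
have e : k.+1%:R / n%:R = k%:R / n%:R + n%:R^-1 :> R by rewrite -natr1 mulrDl div1r.
have := hinc (k%:R / n%:R) (k.+1%:R / n%:R).
rewrite e; move=> h; have := h (divr_ge0 (ler0n _ _) (ltW hn0)).
rewrite lerDl invr_ge0 ltW // => /(_ isT).
rewrite -e ler_pdivrMr // mul1r ler_nat => /(_ hk); lra.
Qed.

Lemma step_decr (R : realType) (f : R -> R) n : (0 < n)%N ->
  mono_decr01 (fun x => f x + x) ->
  forall k, (k < n)%N -> f (k.+1%:R / n%:R) + n%:R^-1 <= f (k%:R / n%:R).
Proof.
move=> hn hinc k hk.
have hn0 : 0 < n%:R :> R by rewrite ltr0n.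
have e : k.+1%:R / n%:R = k%:R / n%:R + n%:R^-1 :> R by rewrite -natr1 mulrDl div1r.
have := hinc (k%:R / n%:R) (k.+1%:R / n%:R).
rewrite e; move=> h; have := h (divr_ge0 (ler0n _ _) (ltW hn0)).
rewrite lerDl invr_ge0 ltW // => /(_ isT).
rewrite -e ler_pdivrMr // mul1r ler_nat => /(_ hk); lra.
Qed.

Theorem theorem1p7 (R : realType) (f : R -> R)
  (hf0 : exists z : int, f 0 = z%:~R) (hf1 : exists z : int, f 1 = z%:~R) :
  (mono_incr01 (fun x => f x - x) ->
     forall n : nat, (0 < n)%N ->
       mono_incr01 (Btilde n f) /\
       (forall c : nat -> int, nearest_coefs n f c -> mono_incr01 (Bhat (R:=R) n c)))
  /\
  (mono_decr01 (fun x => f x + x) ->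
     forall n : nat, (0 < n)%N ->
       mono_decr01 (Btilde n f) /\
       (forall c : nat -> int, nearest_coefs n f c -> mono_decr01 (Bhat (R:=R) n c))).
Proof.
split=> hm n hn.
- have hd := step_incr hn hm.
  split.
    move=> x y hx hxy hy; rewrite /Btilde !BintG.
    apply: G_incr => // k hk.
    have /andP [h1 h2] := Lfloor hn hf0 hf1 (ltnW hk).
    have /andP [h3 h4] := Lfloor hn hf0 hf1 hk.
    have := hd k hk; lra.
  move=> c hc x y hx hxy hy; rewrite /Bhat !BintG.
  apply: G_incr => // k hk.
  have := Lnear hn hf0 hf1 (ltnW hk) (hc k (ltnW hk)); rewrite ler_norml => /andP [h1 h2].
  have := Lnear hn hf0 hf1 hk (hc k.+1 hk); rewrite ler_norml => /andP [h3 h4].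
  have := hd k hk; lra.
- have hd := step_decr hn hm.
  split.
    move=> x y hx hxy hy; rewrite /Btilde !BintG.
    apply: G_decr => // k hk.
    have /andP [h1 h2] := Lfloor hn hf0 hf1 (ltnW hk).
    have /andP [h3 h4] := Lfloor hn hf0 hf1 hk.
    have := hd k hk; lra.
  move=> c hc x y hx hxy hy; rewrite /Bhat !BintG.
  apply: G_decr => // k hk.
  have := Lnear hn hf0 hf1 (ltnW hk) (hc k (ltnW hk)); rewrite ler_norml => /andP [h1 h2].
  have := Lnear hn hf0 hf1 hk (hc k.+1 hk); rewrite ler_norml => /andP [h3 h4].
  have := hd k hk; lra.
Qed.
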